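(* Consider $\tau=t$ on Minkowski space $\mathbb{M}^{n+1}=(\mathbb{R}\times\mathbb{R}^n,-dt^2+(dx^1)^2+\dots+(dx^n)^2)$, and write $p=(t_p,p_S)$ with $p_S\in\mathbb{R}^n$. Then: (1) $\hat{d}_t$ is a definite, translation invariant metric on $\mathbb{M}^{n+1}$, with $\hat{d}_t(p,q)=|t(q)-t(p)|$ if $q\in J^+(p)\cup J^-(p)$, and $\hat{d}_t(p,q)=\|q_S-p_S\|$ if $q\notin J^+(p)\cup J^-(p)$, where $\|\cdot\|$ is the Euclidean norm; (2) for all $p,q$: $p\le q \iff \hat{d}_t(p,q)=t(q)-t(p)$; (3) the $\hat{d}_t$-spheres are coordinate cylinders; for example, the null distance sphere of radius $r$ about the origin is $\{(t,x):\max\{|t|,\|x\|\}=r\}$.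
   Context: Minkowski space is time-oriented by $\partial_t$. Piecewise smooth curves are future (past) causal if all tangents, including one-sided ones, are future (past) pointing causal vectors; constant curves count as causal. $J^+(p)$ ($J^-(p)$) is the set of points reachable from $p$ by a future (past) causal curve, and $p\le q$ means $q\in J^+(p)$. For a function $\tau$ strictly increasing along future causal curves, a piecewise causal curve $\beta:[a,b]\to M$ has a partition $a=s_0<\dots<s_k=b$ with each restriction a smooth future or past causal curve; its null length is $\hat{L}_\tau(\beta)=\sum_i|\tau(\beta(s_i))-\tau(\beta(s_{i-1}))|$, and $\hat{d}_\tau(p,q)=\inf\{\hat{L}_\tau(\beta):\beta$ piecewise causal from $p$ to $q\}$. *)

(* Defs.v *)
From HB Require Import structures.
From mathcomp Require Import all_boot all_order all_algebra.
From mathcomp Require Import all_classical all_reals all_analysis.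
Set Implicit Arguments. Unset Strict Implicit. Unset Printing Implicit Defensive.
Import Order.TTheory GRing.Theory Num.Theory.
Local Open Scope classical_set_scope.
Local Open Scope ring_scope.

Section Minkowski.
Variables (R : realType) (n : nat).

Definition pt := (R * 'rV[R]_n)%type.
Definition tcoord (p : pt) : R := p.1.
Definition scoord (p : pt) : 'rV[R]_n := p.2.

(* Euclidean norm on R^n (not the max norm of the library). *)
Definition eucl_norm (v : 'rV[R]_n) : R := Num.sqrt (\sum_(i < n) v 0 i ^+ 2).

Definition padd (p q : pt) : pt := (p.1 + q.1, p.2 + q.2).

Definition mink (v : pt) : R := - v.1 ^+ 2 + \sum_(i < n) v.2 0 i ^+ 2.

(* causal vector: nonzero with g(v,v) <= 0; future (past) pointing w.r.t. d_t:
   g(v, d_t) = - v.1 < 0 (> 0). *)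
Definition causal_vec (v : pt) : Prop := mink v <= 0 /\ v <> (0, 0).
Definition future_causal_vec (v : pt) : Prop := causal_vec v /\ 0 < v.1.
Definition past_causal_vec (v : pt) : Prop := causal_vec v /\ v.1 < 0.

Definition smooth_fun (f : R -> R) : Prop :=
  forall (k : nat) (x : R), derivable (derive1n k f) x 1.
Definition tcomp (g : R -> pt) : R -> R := fun s => (g s).1.
Definition scomp (g : R -> pt) (i : 'I_n) : R -> R := fun s => (g s).2 0 i.
Definition smooth_curve (g : R -> pt) : Prop :=
  smooth_fun (tcomp g) /\ forall i, smooth_fun (scomp g i).
Definition tangent (g : R -> pt) (s : R) : pt :=
  (derive1 (tcomp g) s, \row_(i < n) derive1 (scomp g i) s).

Definition const_on (beta : R -> pt) (a b : R) : Prop :=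
  forall s, a <= s <= b -> beta s = beta a.

(* beta restricted to [a,b] is smooth (restriction of a smooth curve on R, so
   tangents at a and b are the one-sided tangents) and all its tangents satisfy P *)
Definition smooth_with_tangents (P : pt -> Prop) (beta : R -> pt) (a b : R) : Prop :=
  exists g : R -> pt, smooth_curve g /\ (forall s, a <= s <= b -> g s = beta s) /\
    (forall s, a <= s <= b -> P (tangent g s)).

Definition smooth_future_causal (beta : R -> pt) (a b : R) : Prop :=
  const_on beta a b \/ smooth_with_tangents future_causal_vec beta a b.
Definition smooth_past_causal (beta : R -> pt) (a b : R) : Prop :=
  const_on beta a b \/ smooth_with_tangents past_causal_vec beta a b.

Definition partition (a b : R) (k : nat) (s : nat -> R) : Prop :=
  s 0%N = a /\ s k = b /\ forall i : nat, (i < k)%N -> s i < s i.+1.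

Definition future_causal_curve (beta : R -> pt) (a b : R) : Prop :=
  a <= b /\ (const_on beta a b \/
    exists k s, partition a b k s /\ forall i : nat, (i < k)%N ->
      smooth_with_tangents future_causal_vec beta (s i) (s i.+1)).
Definition past_causal_curve (beta : R -> pt) (a b : R) : Prop :=
  a <= b /\ (const_on beta a b \/
    exists k s, partition a b k s /\ forall i : nat, (i < k)%N ->
      smooth_with_tangents past_causal_vec beta (s i) (s i.+1)).

Definition Jplus (p q : pt) : Prop :=
  exists (beta : R -> pt) (a b : R), future_causal_curve beta a b /\ beta a = p /\ beta b = q.
Definition Jminus (p q : pt) : Prop :=
  exists (beta : R -> pt) (a b : R), past_causal_curve beta a b /\ beta a = p /\ beta b = q.

Definition causal_le (p q : pt) : Prop := Jplus p q.

Definition piecewise_causal (beta : R -> pt) (a b : R) (k : nat) (s : nat -> R) : Prop :=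
  partition a b k s /\ forall i : nat, (i < k)%N ->
    smooth_future_causal beta (s i) (s i.+1) \/ smooth_past_causal beta (s i) (s i.+1).

Definition null_length (beta : R -> pt) (k : nat) (s : nat -> R) : R :=
  \sum_(i < k) `|tcoord (beta (s i.+1)) - tcoord (beta (s i))|.

Definition nulldist (p q : pt) : R :=
  inf [set L : R | exists (beta : R -> pt) (a b : R) (k : nat) (s : nat -> R),
         piecewise_causal beta a b k s /\ beta a = p /\ beta b = q /\
         L = null_length beta k s].

End Minkowski.

(* Main.v *)
Require Import Defs.
From HB Require Import structures.
From mathcomp Require Import all_boot all_order all_algebra.
From mathcomp Require Import all_classical all_reals all_analysis.
From mathcomp Require Import ring lra.
Import Order.TTheory GRing.Theory Num.Theory.
Local Open Scope classical_set_scope.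
Local Open Scope ring_scope.

Section Aux.
Variables (R : realType) (n : nat).
Definition ip (u w : 'rV[R]_n) : R := \sum_(i < n) u 0 i * w 0 i.
Definition sq (w : 'rV[R]_n) : R := \sum_(i < n) w 0 i ^+ 2.

Lemma sq_ge0 (w : 'rV[R]_n) : 0 <= sq w.
Proof. by apply: sumr_ge0 => i _; rewrite sqr_ge0. Qed.

Lemma sq_eq0 (w : 'rV[R]_n) : sq w = 0 -> w = 0.
Proof.
move=> /eqP; rewrite psumr_eq0; last by move=> i _; rewrite sqr_ge0.
move=> /allP H; apply/rowP => i; rewrite mxE.
have := H i (mem_index_enum i); rewrite sqrf_eq0 => /eqP ->. done.
Qed.

Lemma expand_sq (A B : R) (u w : 'rV[R]_n) :
  \sum_(i < n) (A * u 0 i - B * w 0 i) ^+ 2 = A^+2 * sq u - 2 * A * B * ip u w + B ^+ 2 * sq w.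
Proof.
rewrite /sq /ip !mulr_sumr -sumrB -big_split /=; apply: eq_bigr => i _; ring.
Qed.

Lemma CS (u w : 'rV[R]_n) : ip u w ^+ 2 <= sq u * sq w.
Proof.
have := expand_sq (sq w) (ip u w) u w.
have h0 : 0 <= \sum_(i < n) (sq w * u 0 i - ip u w * w 0 i) ^+ 2.
  by apply: sumr_ge0 => i _; rewrite sqr_ge0.
move=> E; rewrite E in h0.
have [w0|wp] := eqVneq (sq w) 0.
  have -> : ip u w = 0 by rewrite (sq_eq0 w w0) /ip big1 // => i _; rewrite mxE mulr0.
  by rewrite w0 mulr0 expr0n.
have swp : 0 < sq w by rewrite lt_def wp sq_ge0.
have : 0 <= sq w * (sq u * sq w - ip u w ^+ 2).
  have -> : sq w * (sq u * sq w - ip u w ^+ 2) = sq w ^+ 2 * sq u - 2 * sq w * ip u w * ip u w + ip u w ^+ 2 * sq w by ring.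
  exact: h0.
by rewrite pmulr_rge0 // subr_ge0.
Qed.


Lemma ipB (u a b : 'rV[R]_n) : ip u (a - b) = ip u a - ip u b.
Proof. by rewrite /ip -sumrB; apply: eq_bigr => i _; rewrite !mxE mulrBr. Qed.

Lemma seg_bound (g : R -> pt R n) (a b sgn : R) (u : 'rV[R]_n) :
  smooth_curve g -> a <= b ->
  (forall s, a <= s <= b -> ip u (tangent g s).2 <= sgn * (tangent g s).1) ->
  ip u ((g b).2 - (g a).2) <= sgn * ((g b).1 - (g a).1).
Proof.
move=> [st ss] ab H.
pose f := (\sum_(i < n) (u 0 i \*: scomp g i)) - sgn \*: tcomp g.
have fE s : f s = ip u (g s).2 - sgn * (g s).1.
  by rewrite /f /= fct_sumE /ip.
have dc (h : R -> R) : smooth_fun h -> forall x : R, derivable h x 1 := fun sh x => sh 0%N x.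
have fd (x : R) : is_derive x 1 f (ip u (tangent g x).2 - sgn * (tangent g x).1).
  apply: is_derive_eq.
    apply: is_deriveB; last by apply: is_deriveZ; exact: derivableP (dc _ st x).
    apply: is_derive_sum => i; apply: is_deriveZ; exact: derivableP (dc _ (ss i) x).
  rewrite /ip /tangent /= -derive1E; congr (_ - _).
  by apply: eq_bigr => i _; rewrite mxE -derive1E.
have key : f b <= f a.
  apply: (@ler0_derive1_nincr _ f a b) => //.
  - move=> x; rewrite in_itv /= => /andP[ax xb].
    have := fd x => fdx; rewrite derive1E derive_val subr_le0; apply: H.
    by rewrite !ltW.
  - apply: derivable_within_continuous => x _; by case: (fd x).
move: key; rewrite !fE ipB => key.
rewrite mulrBr; lra.
Qed.

Lemma tele (F G : nat -> R) (k : nat) :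
  (forall i : nat, (i < k)%N -> F i.+1 - F i <= G i) ->
  F k - F 0%N <= \sum_(i < k) G i.
Proof.
elim: k => [|k IH] H; first by rewrite subrr big_ord0.
rewrite big_ord_recr /=.
have h1 := IH (fun i ik => H i (ltn_trans ik (ltnSn k))).
have h2 := H k (leqnn k.+1).
lra.
Qed.

Lemma causal_ip (v : pt R n) (u : 'rV[R]_n) : sq u <= 1 -> mink v <= 0 ->
  `|ip u v.2| <= `|v.1|.
Proof.
move=> su mk.
have h1 := CS u v.2.
have h2 := sq_ge0 v.2.
have h3 : - v.1 ^+ 2 + sq v.2 <= 0 by exact: mk.
have : ip u v.2 ^+ 2 <= v.1 ^+ 2 by nra.
by rewrite -ler_sqrt ?sqr_ge0 // !sqrtr_sqr.
Qed.

Lemma fut_seg (beta : R -> pt R n) a b u : a <= b -> sq u <= 1 ->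
  smooth_with_tangents (@future_causal_vec R n) beta a b ->
  ip u ((beta b).2 - (beta a).2) <= (beta b).1 - (beta a).1.
Proof.
move=> ab su [g [sg [eg tg]]].
rewrite -!eg ?lexx ?ab //.
rewrite -[X in _ <= X]mul1r; apply: seg_bound => // s sab.
have [[mk _] pos] := tg s sab.
rewrite mul1r; apply: (le_trans (ler_norm _)).
by rewrite (le_trans (causal_ip _ _ su mk)) // gtr0_norm.
Qed.

Lemma past_seg (beta : R -> pt R n) a b u : a <= b -> sq u <= 1 ->
  smooth_with_tangents (@past_causal_vec R n) beta a b ->
  ip u ((beta b).2 - (beta a).2) <= - ((beta b).1 - (beta a).1).
Proof.
move=> ab su [g [sg [eg tg]]].
rewrite -!eg ?lexx ?ab //.
rewrite -mulN1r; apply: seg_bound => // s sab.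
have [[mk _] neg] := tg s sab.
rewrite mulN1r; apply: (le_trans (ler_norm _)).
by rewrite (le_trans (causal_ip _ _ su mk)) // ltr0_norm.
Qed.

Lemma ip0 (w : 'rV[R]_n) : ip 0 w = 0.
Proof. by rewrite /ip big1 // => i _; rewrite mxE mul0r. Qed.

Lemma sq0 : sq (0 : 'rV[R]_n) = 0.
Proof. by rewrite /sq big1 // => i _; rewrite mxE expr0n. Qed.

Lemma any_seg (beta : R -> pt R n) a b u : a <= b -> sq u <= 1 ->
  smooth_future_causal beta a b \/ smooth_past_causal beta a b ->
  ip u ((beta b).2 - (beta a).2) <= `|(beta b).1 - (beta a).1|.
Proof.
move=> ab su [[c|f]|[c|f]].
- by rewrite (c b) ?lexx ?ab // !subrr normr0 /ip big1 // => i _; rewrite mxE mulr0.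
- exact: le_trans (fut_seg _ _ _ u ab su f) (ler_norm _).
- by rewrite (c b) ?lexx ?ab // !subrr normr0 /ip big1 // => i _; rewrite mxE mulr0.
- by apply: le_trans (past_seg _ _ _ u ab su f) _; rewrite -normrN ler_norm.
Qed.

Lemma en_sq (v : 'rV[R]_n) : eucl_norm v ^+ 2 = sq v.
Proof. by rewrite /eucl_norm sqr_sqrtr // sq_ge0. Qed.

Lemma en_ge0 (v : 'rV[R]_n) : 0 <= eucl_norm v.
Proof. exact: sqrtr_ge0. Qed.

Lemma sq_scale (c : R) (v : 'rV[R]_n) : sq (c *: v) = c ^+ 2 * sq v.
Proof. by rewrite /sq mulr_sumr; apply: eq_bigr => i _; rewrite mxE exprMn. Qed.

Lemma ip_scale (c : R) (v w : 'rV[R]_n) : ip (c *: v) w = c * ip v w.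
Proof. by rewrite /ip mulr_sumr; apply: eq_bigr => i _; rewrite mxE mulrA. Qed.

Lemma ip_self (v : 'rV[R]_n) : ip v v = sq v.
Proof. by rewrite /ip /sq; apply: eq_bigr => i _; rewrite expr2. Qed.

Lemma norm_bound (d : 'rV[R]_n) (c : R) :
  (forall u, sq u <= 1 -> ip u d <= c) -> eucl_norm d <= c.
Proof.
move=> H.
have c0 : 0 <= c by have := H 0; rewrite sq0 ip0; apply.
have [e0|ne0] := eqVneq (eucl_norm d) 0; first by rewrite e0.
have ep : 0 < eucl_norm d by rewrite lt_def ne0 en_ge0.
have := H ((eucl_norm d)^-1 *: d).
rewrite sq_scale ip_scale ip_self -en_sq exprVn mulVf ?expf_neq0 // lexx => /(_ isT).
by rewrite expr2 mulrA mulVf ?mul1r.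
Qed.

Lemma ip_le_en (a b : 'rV[R]_n) : ip a b <= eucl_norm a * eucl_norm b.
Proof.
apply: le_trans (ler_norm _) _.
have h := CS a b.
rewrite -(ler_sqrt (ip a b ^+ 2)) ?mulr_ge0 ?sq_ge0 // sqrtr_sqr in h.
by rewrite (le_trans h) // sqrtrM ?sq_ge0.
Qed.

Lemma sqD (a b : 'rV[R]_n) : sq (a + b) = sq a + 2 * ip a b + sq b.
Proof.
rewrite /sq /ip mulr_sumr -!big_split /=; apply: eq_bigr => i _; rewrite mxE; ring.
Qed.

Lemma en_triangle (a b : 'rV[R]_n) : eucl_norm (a + b) <= eucl_norm a + eucl_norm b.
Proof.
have h : sq (a + b) <= (eucl_norm a + eucl_norm b) ^+ 2.
  rewrite sqD sqrrD !en_sq; have := ip_le_en a b; lra.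
rewrite -(ger0_norm (addr_ge0 (en_ge0 a) (en_ge0 b))) -sqrtr_sqr.
by rewrite /eucl_norm ler_sqrt ?sqr_ge0.
Qed.

Lemma sqN (a : 'rV[R]_n) : sq (- a) = sq a.
Proof. by rewrite /sq; apply: eq_bigr => i _; rewrite mxE sqrrN. Qed.

Lemma en_opp (a : 'rV[R]_n) : eucl_norm (- a) = eucl_norm a.
Proof. by rewrite /eucl_norm -/(sq _) sqN. Qed.

Lemma en_eq0 (a : 'rV[R]_n) : eucl_norm a = 0 -> a = 0.
Proof.
move=> /eqP; rewrite sqrtr_eq0 => h; apply: sq_eq0.
by apply/eqP; rewrite eq_le h sq_ge0.
Qed.

Definition N (p q : pt R n) : R := Num.max `|q.1 - p.1| (eucl_norm (q.2 - p.2)).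

Lemma lower (beta : R -> pt R n) a b k s :
  piecewise_causal beta a b k s -> N (beta a) (beta b) <= null_length beta k s.
Proof.
move=> [[s0 [sk sinc]] segs]; rewrite -s0 -sk.
have segb u (su : sq u <= 1) i (ik : (i < k)%N) :=
  any_seg _ _ _ u (ltW (sinc i ik)) su (segs i ik).
rewrite /N ge_max; apply/andP; split.
  have t1 := tele (fun i => (beta (s i)).1)
    (fun i : nat => `|(beta (s i.+1)).1 - (beta (s i)).1|) k
    (fun i _ => ler_norm _).
  have t2 := tele (fun i => - (beta (s i)).1)
    (fun i : nat => `|(beta (s i.+1)).1 - (beta (s i)).1|) k
    (fun i _ => ltac:(by rewrite -opprD -normrN ler_norm)).
  rewrite /null_length /tcoord ler_norml; apply/andP; split; simpl in t1, t2; lra.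
apply: norm_bound => u su; rewrite ipB.
exact: (tele (fun i => ip u (beta (s i)).2)
    (fun i : nat => `|(beta (s i.+1)).1 - (beta (s i)).1|) k
    (fun i ik => ltac:(by rewrite -ipB; apply: segb))).
Qed.

Lemma aff_der (al be s0 x : R) : is_derive x 1 (fun s : R => al + (s - s0) * be) be.
Proof.
have -> : (fun s : R => al + (s - s0) * be) = cst al + be \*: (id - cst s0).
  by apply: funext => s /=; rewrite mulrC.
apply: is_derive_eq.
by rewrite subr0 add0r scaler1.
Qed.

Lemma aff_smooth (al be s0 : R) : smooth_fun (fun s : R => al + (s - s0) * be).
Proof.
have H : forall k, exists al' be' : R,
    derive1n k (fun s : R => al + (s - s0) * be) = (fun s : R => al' + (s - s0) * be').
  elim => [|k [a' [b' IH]]]; first by exists al, be.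
  exists b', 0; rewrite derive1nS IH; apply: funext => x.
  have h := aff_der a' b' s0 x.
  by rewrite derive1E derive_val mulr0 addr0.
move=> k x; have [a' [b' ->]] := H k.
by case: (aff_der a' b' s0 x).
Qed.

Definition aff (c v : pt R n) (s0 : R) : R -> pt R n :=
  fun s => (c.1 + (s - s0) * v.1, c.2 + (s - s0) *: v.2).

Lemma scomp_aff c v s0 i :
  scomp (aff c v s0) i = (fun s => c.2 0 i + (s - s0) * v.2 0 i).
Proof. by apply: funext => s; rewrite /scomp /aff /= !mxE. Qed.

Lemma aff_curve c v s0 : smooth_curve (aff c v s0).
Proof.
split; first exact: aff_smooth.
by move=> i; rewrite scomp_aff; exact: aff_smooth.
Qed.

Lemma aff_tangent c v s0 s : tangent (aff c v s0) s = v.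
Proof.
have e1 : derive1 (tcomp (aff c v s0)) s = v.1.
  have h := aff_der c.1 v.1 s0 s; rewrite derive1E; exact: derive_val.
have e2 : \row_i derive1 (scomp (aff c v s0) i) s = v.2.
  apply/rowP => i; rewrite mxE scomp_aff derive1E.
  have h := aff_der (c.2 0 i) (v.2 0 i) s0 s; exact: derive_val.
by rewrite /tangent e1 e2; case: (v).
Qed.

Lemma aff0 c v s0 : aff c v s0 s0 = c.
Proof. by rewrite /aff subrr mul0r scale0r !addr0; case: (c). Qed.

Lemma seg_future (beta : R -> pt R n) c v s0 s1 : 0 < v.1 -> mink v <= 0 ->
  (forall s, s0 <= s <= s1 -> beta s = aff c v s0 s) ->
  smooth_with_tangents (@future_causal_vec R n) beta s0 s1.
Proof.
move=> pos mk H; exists (aff c v s0); split; first exact: aff_curve.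
split; first by move=> s h; rewrite H.
move=> s _; rewrite aff_tangent; split => //; split => // v0.
by rewrite v0 /= ltxx in pos.
Qed.

Lemma seg_past (beta : R -> pt R n) c v s0 s1 : v.1 < 0 -> mink v <= 0 ->
  (forall s, s0 <= s <= s1 -> beta s = aff c v s0 s) ->
  smooth_with_tangents (@past_causal_vec R n) beta s0 s1.
Proof.
move=> neg mk H; exists (aff c v s0); split; first exact: aff_curve.
split; first by move=> s h; rewrite H.
move=> s _; rewrite aff_tangent; split => //; split => // v0.
by rewrite v0 /= ltxx in neg.
Qed.

Lemma mink_zero (v : pt R n) : mink v <= 0 -> v.1 = 0 -> v = (0, 0).
Proof.
move=> mk v10.
have h : sq v.2 <= 0 by move: mk; rewrite /mink v10 expr0n /= oppr0 add0r.
have : v.2 = 0 by apply: sq_eq0; apply/eqP; rewrite eq_le h sq_ge0.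
by case: v mk v10 {h} => a b /= _ -> ->.
Qed.

Lemma seg_any (beta : R -> pt R n) c v s0 s1 : s0 <= s1 -> mink v <= 0 ->
  (forall s, s0 <= s <= s1 -> beta s = aff c v s0 s) ->
  smooth_future_causal beta s0 s1 \/ smooth_past_causal beta s0 s1.
Proof.
move=> le mk H.
case: (ltrgtP v.1 0) => hv.
- by right; right; exact: seg_past hv mk H.
- by left; right; exact: seg_future hv mk H.
- left; left => s hs; rewrite !H ?hs ?lexx ?le // (mink_zero _ mk hv).
  by rewrite /aff !mulr0 !scaler0 !addr0.
Qed.

Definition zz (p v1 v2 : pt R n) : R -> pt R n :=
  fun s => if s <= 1 then aff p v1 0 s else aff (aff p v1 0 1) v2 1 s.

Definition nats : nat -> R := fun i => i%:R.

Lemma nats_part k : Defs.partition 0 k%:R k nats.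
Proof. by split; [|split] => // i _; rewrite /nats ltr_nat. Qed.

Lemma zz_pc p v1 v2 : mink v1 <= 0 -> mink v2 <= 0 ->
  piecewise_causal (zz p v1 v2) 0 2 2 nats.
Proof.
move=> m1 m2; split; first exact: (nats_part 2).
case=> [|[|//]] _; rewrite /nats.
- apply: (@seg_any _ p v1 0 1) => //.
  by move=> s /andP[_ s1]; rewrite /zz s1.
- apply: (@seg_any _ (aff p v1 0 1) v2 1 2) => //; first lra.
  move=> s /andP[s1 _]; rewrite /zz; case: ifP => // s1'.
  have -> : s = 1 by apply/eqP; rewrite eq_le s1 s1'.
  by rewrite aff0.
Qed.

Lemma zz0 p v1 v2 : zz p v1 v2 0 = p.
Proof. by rewrite /zz ler01 aff0. Qed.

Lemma zz2 p v1 v2 : zz p v1 v2 2 = (p.1 + v1.1 + v2.1, p.2 + v1.2 + v2.2).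
Proof.
rewrite /zz; have -> : ((2 : R) <= 1) = false by apply/negbTE; rewrite -ltNge ltr1n.
by rewrite /aff /= !subr0 !mul1r !scale1r (_ : (2 : R) - 1 = 1) ?mul1r ?scale1r //; lra.
Qed.

Lemma zz_len p v1 v2 : null_length (zz p v1 v2) 2 nats = `|v1.1| + `|v2.1|.
Proof.
rewrite /null_length big_ord_recr big_ord_recr big_ord0 /= /nats /tcoord add0r.
have -> : zz p v1 v2 1 = aff p v1 0 1 by rewrite /zz lexx.
rewrite zz0 zz2 /aff /=.
congr (_ + _); congr (`|_|); lra.
Qed.

Lemma sq_unit (d : 'rV[R]_n) : eucl_norm d != 0 -> sq ((eucl_norm d)^-1 *: d) = 1.
Proof. by move=> ne0; rewrite sq_scale -en_sq exprVn mulVf ?expf_neq0. Qed.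

Lemma mem_aux (dt : R) (dx : 'rV[R]_n) : exists v1 v2 : pt R n,
  [/\ mink v1 <= 0, mink v2 <= 0, v1.1 + v2.1 = dt, v1.2 + v2.2 = dx &
     `|v1.1| + `|v2.1| = Num.max `|dt| (eucl_norm dx)].
Proof.
have [Dle|Dlt] := leP (eucl_norm dx) `|dt|.
- exists (dt, dx), (0, 0); split => /=; rewrite ?addr0 //.
  + rewrite /mink /= -/(sq _) -en_sq -real_normK ?num_real // addrC subr_le0.
    by rewrite ler_pXn2r ?nnegrE ?normr_ge0 ?en_ge0.
  + by rewrite /mink /= -/(sq _) sq0 expr0n /= oppr0 addr0.
  + by rewrite normr0 addr0.
have D0 : 0 < eucl_norm dx by apply: le_lt_trans Dlt.
have Dn0 : eucl_norm dx != 0 by rewrite gt_eqF.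
have su : sq ((eucl_norm dx)^-1 *: dx) = 1 by apply: sq_unit.
move: Dlt; rewrite ltr_norml => /andP[h1 h2].
exists ((eucl_norm dx + dt) / 2, ((eucl_norm dx + dt) / 2) *: ((eucl_norm dx)^-1 *: dx)).
exists (- ((eucl_norm dx - dt) / 2), ((eucl_norm dx - dt) / 2) *: ((eucl_norm dx)^-1 *: dx)).
split => /=.
- by rewrite /mink /= -/(sq _) sq_scale su mulr1 addNr.
- by rewrite /mink /= -/(sq _) sq_scale su mulr1 sqrrN addNr.
- lra.
- rewrite -scalerDl scalerA (_ : (eucl_norm dx + dt) / 2 + (eucl_norm dx - dt) / 2 = eucl_norm dx).
    by rewrite mulfV ?scale1r.
  lra.
- rewrite normrN !ger0_norm; lra.
Qed.

Lemma nd_formula (p q : pt R n) : nulldist p q = N p q.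
Proof.
rewrite /nulldist; set S := (X in inf X).
have lb : forall L, S L -> N p q <= L.
  move=> L [beta [a [b [k [s [pc [ea [eb ->]]]]]]]].
  by rewrite -ea -eb; apply: lower pc.
have mem : S (N p q).
  have [v1 [v2 [m1 m2 e1 e2 eL]]] := mem_aux (q.1 - p.1) (q.2 - p.2).
  exists (zz p v1 v2), 0, 2, 2%N, nats; split; first exact: zz_pc.
  split; first exact: zz0.
  split; first by rewrite zz2 -!addrA e1 e2 !(addrC p.1) !(addrC p.2) !subrK; case: (q).
  by rewrite zz_len eL.
apply/le_anti/andP; split.
  by apply: ge_inf mem; exists (N p q) => L; apply: lb.
by apply: lb_le_inf; [exists (N p q) | move=> L; apply: lb].
Qed.

Lemma tele_eq (F : nat -> R) (k : nat) :
  \sum_(i < k) (F i.+1 - F i) = F k - F 0%N.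
Proof.
elim: k => [|k IH]; first by rewrite big_ord0 subrr.
by rewrite big_ord_recr /= IH; lra.
Qed.

Lemma qE (p q : pt R n) : (p.1 + (q.1 - p.1), p.2 + (q.2 - p.2)) = q.
Proof. by rewrite !(addrC p.1) !(addrC p.2) !subrK; case: (q). Qed.

Lemma Jplus_of (p q : pt R n) : eucl_norm (q.2 - p.2) <= q.1 - p.1 -> Jplus p q.
Proof.
move=> h; set v := (q.1 - p.1, q.2 - p.2).
have mk : mink v <= 0.
  rewrite /mink /= -/(sq _) -en_sq addrC subr_le0.
  by rewrite ler_pXn2r ?nnegrE ?en_ge0 // (le_trans (en_ge0 _) h).
exists (aff p v 0), 0, 1; split; last first.
  by split; [exact: aff0 | rewrite /aff /= !subr0 !mul1r scale1r qE].
split; first exact: ler01.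
have [v10|v1p] := eqVneq v.1 0.
  left => s _; rewrite aff0 /aff (mink_zero _ mk v10) /= mulr0 scaler0 !addr0.
  by case: (p).
right; exists 1%N, nats; split; first exact: (nats_part 1).
case=> [|//] _; apply: (@seg_future _ p v) => //.
  by rewrite lt_def v1p (le_trans (en_ge0 _) h).
Qed.

Lemma Jminus_of (p q : pt R n) : eucl_norm (q.2 - p.2) <= - (q.1 - p.1) -> Jminus p q.
Proof.
move=> h; set v := (q.1 - p.1, q.2 - p.2).
have mk : mink v <= 0.
  rewrite /mink /= -/(sq _) -en_sq addrC subr_le0 -(sqrrN (q.1 - p.1)).
  rewrite ler_pXn2r ?nnegrE ?en_ge0 //; exact: le_trans (en_ge0 _) h.
exists (aff p v 0), 0, 1; split; last first.
  by split; [exact: aff0 | rewrite /aff /= !subr0 !mul1r scale1r qE].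
split; first exact: ler01.
have [v10|v1p] := eqVneq v.1 0.
  left => s _; rewrite aff0 /aff (mink_zero _ mk v10) /= mulr0 scaler0 !addr0.
  by case: (p).
right; exists 1%N, nats; split; first exact: (nats_part 1).
case=> [|//] _; apply: (@seg_past _ p v) => //.
  by rewrite lt_def eq_sym v1p -oppr_ge0 (le_trans (en_ge0 _) h).
Qed.

Lemma Jplus_to (p q : pt R n) : Jplus p q -> eucl_norm (q.2 - p.2) <= q.1 - p.1.
Proof.
move=> [beta [a [b [[ab H] [<- <-]]]]].
apply: norm_bound => u su; rewrite ipB.
case: H => [c|[k [s [[s0 [sk sinc]] segs]]]].
  by rewrite (c b) ?lexx ?ab // !subrr.
rewrite -s0 -sk -(tele_eq (fun i => (beta (s i)).1)).
apply: (tele (fun i => ip u (beta (s i)).2)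
   (fun i : nat => (beta (s i.+1)).1 - (beta (s i)).1)) => i ik.
by rewrite -ipB; apply: fut_seg (ltW (sinc i ik)) su (segs i ik).
Qed.

Lemma Jminus_to (p q : pt R n) : Jminus p q -> eucl_norm (q.2 - p.2) <= - (q.1 - p.1).
Proof.
move=> [beta [a [b [[ab H] [<- <-]]]]].
apply: norm_bound => u su; rewrite ipB.
case: H => [c|[k [s [[s0 [sk sinc]] segs]]]].
  by rewrite (c b) ?lexx ?ab // !subrr oppr0.
rewrite -s0 -sk -(tele_eq (fun i => (beta (s i)).1)).
have E : - (\sum_(i < k) ((beta (s i.+1)).1 - (beta (s i)).1)) =
  \sum_(i < k) - ((beta (s i.+1)).1 - (beta (s i)).1) by rewrite sumrN.
rewrite E.
apply: (tele (fun i => ip u (beta (s i)).2)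
   (fun i : nat => - ((beta (s i.+1)).1 - (beta (s i)).1))) => i ik.
by rewrite -ipB; apply: past_seg (ltW (sinc i ik)) su (segs i ik).
Qed.
End Aux.

Theorem proposition3p3 (R : realType) (n : nat) :
  (* (1) definite, translation invariant metric, with explicit formula *)
  ((forall p q : pt R n, 0 <= nulldist p q) /\
   (forall p : pt R n, nulldist p p = 0) /\
   (forall p q : pt R n, nulldist p q = nulldist q p) /\
   (forall p q r : pt R n, nulldist p r <= nulldist p q + nulldist q r) /\
   (forall p q : pt R n, nulldist p q = 0 -> p = q) /\
   (forall p q v : pt R n, nulldist (padd p v) (padd q v) = nulldist p q) /\
   (forall p q : pt R n, Jplus p q \/ Jminus p q ->
      nulldist p q = `|tcoord q - tcoord p|) /\
   (forall p q : pt R n, ~ (Jplus p q \/ Jminus p q) ->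
      nulldist p q = eucl_norm (scoord q - scoord p))) /\
  (* (2) *)
  (forall p q : pt R n, causal_le p q <-> nulldist p q = tcoord q - tcoord p) /\
  (* (3) spheres are coordinate cylinders *)
  (forall (p : pt R n) (r : R),
     [set q | nulldist p q = r] =
     [set q | Num.max `|tcoord q - tcoord p| (eucl_norm (scoord q - scoord p)) = r]).
Proof.
have ndE := @nd_formula R n.
have en0 : eucl_norm (0 : 'rV[R]_n) = 0.
  by change (Num.sqrt (@sq R n 0) = 0 :> R); rewrite sq0 sqrtr0.
split; last split.
- split.
    by move=> p q; rewrite ndE /N le_max normr_ge0.
  split.
    by move=> p; rewrite ndE /N !subrr normr0 en0 maxxx.
  split.
    by move=> p q; rewrite !ndE /N distrC -en_opp opprB.
  split.
    move=> p q r; rewrite !ndE /N.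
    have t1 : `|r.1 - p.1| <= `|q.1 - p.1| + `|r.1 - q.1|.
      by rewrite (_ : r.1 - p.1 = (q.1 - p.1) + (r.1 - q.1)) ?ler_normD //; ring.
    have t2 : eucl_norm (r.2 - p.2) <= eucl_norm (q.2 - p.2) + eucl_norm (r.2 - q.2).
      have e : q.2 - p.2 + (r.2 - q.2) = r.2 - p.2 by rewrite addrC addrA subrK.
      by rewrite -e; apply: en_triangle.
    rewrite ge_max; apply/andP; split; [apply: le_trans t1 _ | apply: le_trans t2 _];
      by apply: lerD; rewrite le_max lexx ?orbT.
  split.
    move=> p q; rewrite ndE /N => h.
    have h1 : `|q.1 - p.1| <= 0 by rewrite -h le_max lexx.
    have h2 : eucl_norm (q.2 - p.2) <= 0 by rewrite -h le_max lexx orbT.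
    have e1 : q.1 = p.1 by apply/eqP; rewrite -subr_eq0 -normr_le0.
    have e2 : q.2 = p.2.
      apply/eqP; rewrite -subr_eq0; apply/eqP; apply: en_eq0.
      by apply/eqP; rewrite eq_le h2 en_ge0.
    by case: p q e1 e2 {h h1 h2} => p1 p2 [q1 q2] /= -> ->.
  split.
    move=> p q v.
    have e1 : q.1 + v.1 - (p.1 + v.1) = q.1 - p.1 by ring.
    have e2 : (q.2 + v.2) - (p.2 + v.2) = q.2 - p.2.
      by rewrite opprD addrACA subrr addr0.
    by rewrite !ndE /N /padd /= e1 e2.
  split.
    move=> p q HJ; rewrite ndE /N.
    have : eucl_norm (q.2 - p.2) <= `|q.1 - p.1|.
      case: HJ => [/Jplus_to|/Jminus_to] h; apply: le_trans h _;
        by rewrite ?ler_norm // -normrN ler_norm.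
    by move=> h; rewrite max_l.
  move=> p q HJ; rewrite ndE /N.
  have : `|q.1 - p.1| < eucl_norm (q.2 - p.2).
    rewrite ltNge; apply/negP => h; apply: HJ.
    case: (leP 0 (q.1 - p.1)) => hs.
      by left; apply: Jplus_of; rewrite -(ger0_norm hs).
    by right; apply: Jminus_of; rewrite -(ltr0_norm hs).
  by move=> h; rewrite max_r ?ltW.
- move=> p q; rewrite ndE /N; split.
    move=> /Jplus_to h.
    have h0 : 0 <= q.1 - p.1 by apply: le_trans (en_ge0 _ _ _) h.
    by rewrite ger0_norm // max_l.
  move=> h; apply: Jplus_of.
  by rewrite /tcoord -h le_max lexx orbT.
- move=> p r; apply: funext => q /=; by rewrite ndE.
Qed.
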